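(* Let $\tau:\mathscr{A}\to\mathbb{C}$ be a linear functional with $|\tau(q)|\le C_0^{\deg q}$ for every monomial $q$, and let $A>1$ with $C_0/A<1/2$. For $g\in\mathscr{A}_0$ put $Q_m(\Sigma g)=Q_m(\Sigma g,\dots,\Sigma g)$. Then for all $f,g\in\mathscr{A}_0$, $$\|Q_m(\Sigma g)-Q_m(\Sigma f)\|_A\le2(2A^{-2})^m\sum_{k=0}^{m-1}\|g\|_A^k\|f\|_A^{m-k-1}\|f-g\|_A.$$ In particular $\|Q_m(\Sigma g)\|_A\le2(2A^{-2})^m\|g\|_A^m$.
   Context: $\mathscr{A}=\mathbb{C}\langle X_1,\dots,X_n\rangle$, $\mathscr{A}_0$ the span of monomials of degree $\ge1$; $\|P\|_A=\sum_q|\lambda_q(P)|A^{\deg q}$ for $P=\sum_q\lambda_q(P)q$. $\Sigma q=q/\deg q$ on monomials of degree $\ge1$. $\partial_j$: derivation with $\partial_jX_i=\delta_{ij}1\otimes1$; $\mathscr{D}_jq=\sum_{q=BX_jC}CB$; $\mathscr{J}\mathscr{D}g=(\partial_j\mathscr{D}_ig)_{i,j}$, with products in $M_n(\mathscr{A}\otimes\mathscr{A}^{op})$ using $(a\otimes b)(c\otimes d)=ac\otimes db$. $Q_m(g_1,\dots,g_m)=(1\otimes\tau+\tau\otimes1)\{\sum_i[(\mathscr{J}\mathscr{D}g_1)\cdots(\mathscr{J}\mathscr{D}g_m)]_{ii}\}$, where $(1\otimes\tau+\tau\otimes1)(a\otimes b)=a\tau(b)+\tau(a)b$. *)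

(* Defs.v *)
(* Noncommutative polynomials C<X_1..X_n> represented as
   formal finite linear combinations of words (monomials) over 'I_n;
   only the coefficient function (coef) matters for the norm. *)
From HB Require Import structures.
From mathcomp Require Import all_boot all_order all_algebra.
Set Implicit Arguments. Unset Strict Implicit. Unset Printing Implicit Defensive.
Import Order.TTheory GRing.Theory Num.Theory.
Local Open Scope ring_scope.

Section NC.
Variables (R : numClosedFieldType) (n : nat).

(* monomials X_{i1}...X_{ik} as words; degree = size *)
Definition word := seq 'I_n.
Definition ncpoly := seq (R * word).
(* element of A (x) A as formal sum of lambda * (w1 (x) w2) *)
Definition tpoly := seq (R * (word * word)).

Definition coef (P : ncpoly) (w : word) : R := \sum_(t <- P | t.2 == w) t.1.

Definition normA (A : R) (P : ncpoly) : R :=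
  \sum_(w <- undup (map snd P)) `|coef P w| * A ^+ size w.

Definition psub (P Q : ncpoly) : ncpoly := P ++ map (fun t => (- t.1, t.2)) Q.

Definition inA0 (P : ncpoly) : Prop := coef P [::] = 0.

Definition Sigma (P : ncpoly) : ncpoly :=
  map (fun t => (t.1 / (size t.2)%:R, t.2)) P.

Definition occ (j : 'I_n) (w : word) : seq nat :=
  [seq k <- iota 0 (size w) | nth j w k == j].

(* cyclic derivative D_j q = sum_{q = B X_j C} C B *)
Definition Dcyc (j : 'I_n) (P : ncpoly) : ncpoly :=
  flatten [seq [seq (t.1, drop k.+1 t.2 ++ take k t.2) | k <- occ j t.2] | t <- P].

(* free difference quotient d_j q = sum_{q = B X_j C} B (x) C *)
Definition partial (j : 'I_n) (P : ncpoly) : tpoly :=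
  flatten [seq [seq (t.1, (take k t.2, drop k.+1 t.2)) | k <- occ j t.2] | t <- P].

(* product in A (x) A^op : (a (x) b)(c (x) d) = ac (x) db *)
Definition tmul (S T : tpoly) : tpoly :=
  [seq (s.1 * t.1, (s.2.1 ++ t.2.1, t.2.2 ++ s.2.2)) | s <- S, t <- T].

Definition tmx := 'I_n -> 'I_n -> tpoly.

Definition mxmul (M N : tmx) : tmx :=
  fun i k => flatten [seq tmul (M i j) (N j k) | j <- enum 'I_n].

Definition mxid : tmx :=
  fun i j => if i == j then [:: (1, ([::], [::]))] else [::].

Definition JD (g : ncpoly) : tmx := fun i j => partial j (Dcyc i g).

Definition mxtrace (M : tmx) : tpoly := flatten [seq M i i | i <- enum 'I_n].

(* (1 (x) tau + tau (x) 1)(a (x) b) = a tau(b) + tau(a) b, tau given on monomials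
   and extended linearly *)
Definition tauSym (tau : word -> R) (S : tpoly) : ncpoly :=
  flatten [seq [:: (t.1 * tau t.2.2, t.2.1); (t.1 * tau t.2.1, t.2.2)] | t <- S].

Definition Q (tau : word -> R) (gs : seq ncpoly) : ncpoly :=
  tauSym tau (mxtrace (foldr (fun g M => mxmul (JD g) M) mxid gs)).

Definition QmS (tau : word -> R) (m : nat) (g : ncpoly) : ncpoly :=
  Q tau (nseq m (Sigma g)).

End NC.

(* Main.v *)
Require Import Defs.
From HB Require Import structures.
From mathcomp Require Import all_boot all_order all_algebra.
From mathcomp Require Import ring zify.
Import Order.TTheory GRing.Theory Num.Theory.
Local Open Scope ring_scope.
Set Implicit Arguments. Unset Strict Implicit. Unset Printing Implicit Defensive.

Section Gen.
Variable R : numClosedFieldType.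

Definition lsum (X : Type) (P : seq (R * X)) (phi : X -> R) : R :=
  \sum_(t <- P) t.1 * phi t.2.

Definition gcoef (X : eqType) (P : seq (R * X)) (x : X) : R :=
  \sum_(t <- P | t.2 == x) t.1.

Lemma lsum_cat X (P P' : seq (R*X)) phi :
  lsum (P ++ P') phi = lsum P phi + lsum P' phi.
Proof. by rewrite /lsum big_cat. Qed.

Lemma lsum1 X (x : X) phi : lsum [:: (1, x)] phi = phi x.
Proof. by rewrite /lsum big_cons big_nil mul1r addr0. Qed.

Lemma lsum_ext X (P : seq (R*X)) phi psi : phi =1 psi -> lsum P phi = lsum P psi.
Proof. by move=> e; rewrite /lsum; apply: eq_bigr => t _; rewrite e. Qed.

Lemma lsum_sumf X (P : seq (R*X)) (I : Type) (r : seq I) (F : I -> X -> R) :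
  lsum P (fun x => \sum_(i <- r) F i x) = \sum_(i <- r) lsum P (F i).
Proof.
rewrite /lsum; under eq_bigr do rewrite mulr_sumr.
exact: exchange_big.
Qed.

Lemma lsum_swap X Y (P : seq (R*X)) (P' : seq (R*Y)) (F : X -> Y -> R) :
  lsum P (fun x => lsum P' (F x)) = lsum P' (fun y => lsum P (fun x => F x y)).
Proof.
rewrite /lsum; under eq_bigr do rewrite mulr_sumr.
rewrite exchange_big /=; apply: eq_bigr => t _; rewrite mulr_sumr.
by apply: eq_bigr => s _; rewrite mulrCA.
Qed.

Lemma lsum_opp X (P : seq (R*X)) phi :
  lsum [seq (- t.1, t.2) | t <- P] phi = - lsum P phi.
Proof. by rewrite /lsum big_map -sumrN; apply: eq_bigr => t _; rewrite mulNr. Qed.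

Lemma gcoefE (X : eqType) (P : seq (R*X)) y :
  gcoef P y = lsum P (fun x => (x == y)%:R).
Proof.
rewrite /gcoef /lsum big_mkcond; apply: eq_bigr => t _.
by case: eqP => _; rewrite ?mulr1 ?mulr0.
Qed.

Lemma big_seq1_uniq (X : eqType) (s : seq X) (y : X) (F : X -> R) :
  uniq s -> y \in s -> \sum_(x <- s | x == y) F x = F y.
Proof.
elim: s => //= a s IH /andP[a_s us]; rewrite inE big_cons.
case: (eqVneq y a) => [->|ne] /=.
  rewrite ?eqxx big_hasC ?addr0 //; apply/hasPn => x xs; apply/eqP => ax.
  by move: a_s; rewrite -ax xs.
by move=> ys; rewrite IH.
Qed.

Lemma part_sum (X : eqType) (P : seq (R*X)) (s : seq X) (G : R * X -> R) :
  uniq s -> {subset map snd P <= s} ->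
  \sum_(t <- P) G t = \sum_(x <- s) \sum_(t <- P | t.2 == x) G t.
Proof.
move=> us sub.
under [RHS]eq_bigr do rewrite big_mkcond.
rewrite exchange_big /= big_seq [RHS]big_seq; apply: eq_bigr => t tP.
rewrite -big_mkcond /=.
rewrite (eq_bigl (fun x => x == t.2)); last by move=> x; rewrite eq_sym.
have -> := @big_seq1_uniq _ s t.2 (fun=> G t) us. by []. apply: sub; exact: map_f.
Qed.

Lemma GL (X : eqType) (P : seq (R*X)) (s : seq X) psi :
  uniq s -> {subset map snd P <= s} ->
  lsum P psi = \sum_(x <- s) gcoef P x * psi x.
Proof.
move=> us sub; rewrite /lsum (part_sum _ us sub); apply: eq_bigr => x _.
rewrite /gcoef mulr_suml; apply: eq_big => // t /eqP ->; done.
Qed.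

Lemma lsum_congr (X : eqType) (P P' : seq (R*X)) psi :
  (forall x, gcoef P x = gcoef P' x) -> lsum P psi = lsum P' psi.
Proof.
move=> e; set s := undup (map snd (P ++ P')).
have us : uniq s by exact: undup_uniq.
have h1 : {subset map snd P <= s}.
  by move=> x xs; rewrite mem_undup map_cat mem_cat xs.
have h2 : {subset map snd P' <= s}.
  by move=> x xs; rewrite mem_undup map_cat mem_cat xs orbT.
rewrite (GL _ us h1) (GL _ us h2).
by apply: eq_bigr => x _; rewrite e.
Qed.

Lemma big_uniq_sup (X : eqType) (s1 s2 : seq X) (F : X -> R) :
  uniq s1 -> uniq s2 -> {subset s1 <= s2} ->
  (forall x, x \notin s1 -> F x = 0) ->
  \sum_(x <- s2) F x = \sum_(x <- s1) F x.
Proof.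
move=> u1 u2 sub F0.
rewrite (bigID (fun x => x \in s1)) /= [X in _ + X]big1 ?addr0; last first.
  by move=> x /F0.
rewrite -big_filter; apply: perm_big; apply: uniq_perm => //.
  exact: filter_uniq.
move=> x; rewrite mem_filter; apply/andP/idP => [[]//|xs]; split=> //.
exact: sub.
Qed.

Definition gnorm (X : eqType) (sz : X -> nat) (A : R) (P : seq (R*X)) : R :=
  \sum_(w <- undup (map snd P)) `|gcoef P w| * A ^+ sz w.

Lemma gcoef0 (X : eqType) (P : seq (R*X)) x : x \notin map snd P -> gcoef P x = 0.
Proof.
move=> xn; rewrite /gcoef big_hasC //; apply/hasPn => t tP; apply/eqP => e.
by rewrite -e map_f in xn.
Qed.

Lemma gnorm_sup (X : eqType) sz A (P : seq (R*X)) (s : seq X) :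
  uniq s -> {subset map snd P <= s} ->
  gnorm sz A P = \sum_(w <- s) `|gcoef P w| * A ^+ sz w.
Proof.
move=> us sub; rewrite /gnorm; symmetry; apply: big_uniq_sup => //.
- exact: undup_uniq.
- by move=> x; rewrite mem_undup; apply: sub.
- by move=> x; rewrite mem_undup => /gcoef0 ->; rewrite normr0 mul0r.
Qed.


Lemma gcoef_lsum_cat (X : eqType) (P P' : seq (R*X)) x :
  gcoef (P ++ P') x = gcoef P x + gcoef P' x.
Proof. by rewrite /gcoef big_cat. Qed.

Lemma gnorm_congr_abs (X : eqType) sz A (P P' : seq (R*X)) :
  (forall x, `|gcoef P x| = `|gcoef P' x|) -> gnorm sz A P = gnorm sz A P'.
Proof.
move=> e; set s := undup (map snd (P ++ P')).
have us : uniq s by exact: undup_uniq.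
have h1 : {subset map snd P <= s}.
  by move=> x xs; rewrite mem_undup map_cat mem_cat xs.
have h2 : {subset map snd P' <= s}.
  by move=> x xs; rewrite mem_undup map_cat mem_cat xs orbT.
rewrite (gnorm_sup _ _ us h1) (gnorm_sup _ _ us h2).
by apply: eq_bigr => x _; rewrite e.
Qed.

Definition gwt (X : Type) (sz : X -> nat) (A : R) (P : seq (R*X)) : R :=
  \sum_(t <- P) `|t.1| * A ^+ sz t.2.

Lemma gnorm_le_wt (X : eqType) sz A (P : seq (R*X)) :
  0 <= A -> gnorm sz A P <= gwt sz A P.
Proof.
move=> A0; set s := undup (map snd P).
have us : uniq s by exact: undup_uniq.
have h1 : {subset map snd P <= s} by move=> x xs; rewrite mem_undup.
rewrite /gwt (part_sum _ us h1) /gnorm -/s; apply: ler_sum => w _.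
rewrite /gcoef; apply: le_trans (ler_wpM2r _ (ler_norm_sum _ _ _)) _.
  exact: exprn_ge0.
rewrite mulr_suml le_eqVlt; apply/orP; left; apply/eqP.
apply: eq_big => // t /eqP ->; done.
Qed.

Lemma gnorm_ge0 (X : eqType) sz A (P : seq (R*X)) : 0 <= A -> 0 <= gnorm sz A P.
Proof.
move=> A0; apply: sumr_ge0 => w _; apply: mulr_ge0 => //; exact: exprn_ge0.
Qed.

Lemma gnorm_cat (X : eqType) sz A (P P' : seq (R*X)) :
  0 <= A -> gnorm sz A (P ++ P') <= gnorm sz A P + gnorm sz A P'.
Proof.
move=> A0; set s := undup (map snd (P ++ P')).
have us : uniq s by exact: undup_uniq.
have h1 : {subset map snd P <= s}.
  by move=> x xs; rewrite mem_undup map_cat mem_cat xs.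
have h2 : {subset map snd P' <= s}.
  by move=> x xs; rewrite mem_undup map_cat mem_cat xs orbT.
have h3 : {subset map snd (P ++ P') <= s} by move=> x xs; rewrite mem_undup.
rewrite (gnorm_sup _ _ us h1) (gnorm_sup _ _ us h2) (gnorm_sup _ _ us h3).
rewrite -big_split /=; apply: ler_sum => w _.
rewrite gcoef_lsum_cat -mulrDl; apply: ler_wpM2r; first exact: exprn_ge0.
exact: ler_normD.
Qed.

Lemma gnorm_flatten (X : eqType) sz A (Ls : seq (seq (R*X))) :
  0 <= A -> gnorm sz A (flatten Ls) <= \sum_(L <- Ls) gnorm sz A L.
Proof.
move=> A0; elim: Ls => [|L Ls IH] /=.
  by rewrite big_nil /gnorm /= big_nil.
rewrite big_cons; apply: le_trans (gnorm_cat _ _ _ A0) _.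
exact: lerD.
Qed.

Definition nf (X : eqType) (P : seq (R*X)) : seq (R*X) :=
  [seq (gcoef P w, w) | w <- undup (map snd P)].

Lemma gcoef_nf (X : eqType) (P : seq (R*X)) x : gcoef (nf P) x = gcoef P x.
Proof.
rewrite /gcoef /nf big_map /=.
case xP: (x \in undup (map snd P)).
  by rewrite (big_seq1_uniq (fun w => gcoef P w)) // undup_uniq.
rewrite big_hasC; last first.
  by apply/hasPn => w ws; apply/eqP => e; move: xP; rewrite -e ws.
symmetry; rewrite big_hasC //; apply/hasPn => t tP; apply/eqP => e.
by rewrite mem_undup -e map_f in xP.
Qed.

Lemma gwt_nf (X : eqType) sz A (P : seq (R*X)) : gwt sz A (nf P) = gnorm sz A P.
Proof. by rewrite /gwt /nf big_map. Qed.

End Gen.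

Section Ops.
Variables (R : numClosedFieldType) (n : nat).
Local Notation word := (word n).
Local Notation ncpoly := (ncpoly R n).
Local Notation tpoly := (tpoly R n).

Lemma lsum_Sigma (P : ncpoly) phi :
  lsum (Sigma P) phi = lsum P (fun w => phi w / (size w)%:R).
Proof. by rewrite /lsum /Sigma big_map; apply: eq_bigr => t _ /=; ring. Qed.

Lemma lsum_Dcyc i (P : ncpoly) phi :
  lsum (Dcyc i P) phi =
  lsum P (fun w => \sum_(k <- occ i w) phi (drop k.+1 w ++ take k w)).
Proof.
rewrite /lsum /Dcyc big_flatten big_map; apply: eq_bigr => t _.
by rewrite big_map mulr_sumr.
Qed.

Lemma lsum_partial j (P : ncpoly) (phi : word * word -> R) :
  lsum (partial j P) phi =
  lsum P (fun w => \sum_(k <- occ j w) phi (take k w, drop k.+1 w)).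
Proof.
rewrite /lsum /partial big_flatten big_map; apply: eq_bigr => t _.
by rewrite big_map mulr_sumr.
Qed.

Lemma lsum_tmul (S T : tpoly) phi :
  lsum (tmul S T) phi =
  lsum S (fun a => lsum T (fun b => phi (a.1 ++ b.1, b.2 ++ a.2))).
Proof.
rewrite /lsum /tmul big_allpairs_dep; apply: eq_bigr => s _.
rewrite mulr_sumr; apply: eq_bigr => t _ /=; ring.
Qed.

Lemma lsum_mxmul (M N : tmx R n) i k phi :
  lsum (mxmul M N i k) phi = \sum_(j <- enum 'I_n) lsum (tmul (M i j) (N j k)) phi.
Proof. by rewrite /lsum /mxmul big_flatten big_map. Qed.

Lemma lsum_trace (M : tmx R n) phi :
  lsum (Defs.mxtrace M) phi = \sum_(i <- enum 'I_n) lsum (M i i) phi.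
Proof. by rewrite /lsum /Defs.mxtrace big_flatten big_map. Qed.

Lemma lsum_tauSym tau (S : tpoly) phi :
  lsum (tauSym tau S) phi =
  lsum S (fun ab => tau ab.2 * phi ab.1 + tau ab.1 * phi ab.2).
Proof.
rewrite /lsum /tauSym big_flatten big_map; apply: eq_bigr => t _.
rewrite !big_cons big_nil /=; ring.
Qed.

Lemma canon (X Y : Type) (F : seq (R*X) -> seq (R*Y)) phi :
  (exists psi, forall P, lsum (F P) phi = lsum P psi) ->
  forall P, lsum (F P) phi = lsum P (fun x => lsum (F [:: (1, x)]) phi).
Proof.
case=> psi H P; rewrite H; apply: lsum_ext => x.
by rewrite H lsum1.
Qed.

Definition step (g : ncpoly) (M : tmx R n) : tmx R n := mxmul (JD g) M.

Lemma slot_mx (pre post : seq ncpoly) i k phi :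
  exists psi, forall X,
    lsum (foldr step (@mxid R n) (pre ++ X :: post) i k) phi = lsum X psi.
Proof.
elim: pre i k phi => [|g pre IH] i k phi /=.
  eexists => X; rewrite /step lsum_mxmul.
  under eq_bigr do rewrite lsum_tmul /JD lsum_partial lsum_Dcyc.
  by rewrite -lsum_sumf.
eexists => X; rewrite /step lsum_mxmul.
under eq_bigr do rewrite lsum_tmul lsum_swap
  (canon (F := fun X => foldr step (@mxid R n) (pre ++ X :: post) _ k) (IH _ _ _)).
by rewrite -lsum_sumf.
Qed.

Lemma slot_Q tau (pre post : seq ncpoly) phi :
  exists psi, forall X, lsum (Q tau (pre ++ X :: post)) phi = lsum X psi.
Proof.
eexists => X; rewrite /Q lsum_tauSym lsum_trace.
under eq_bigr do rewrite
  (canon (F := fun X => foldr step (@mxid R n) (pre ++ X :: post) _ _) (slot_mx _ _ _ _ _)).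
by rewrite -lsum_sumf.
Qed.

End Ops.

Section Wt.
Variables (R : numClosedFieldType) (n : nat) (x y : R).
Hypotheses (x0 : 0 <= x) (y0 : 0 <= y).
Local Notation word := (word n).
Local Notation ncpoly := (ncpoly R n).
Local Notation tpoly := (tpoly R n).

Definition W (S : tpoly) : R :=
  \sum_(t <- S) `|t.1| * (x ^+ size t.2.1 * y ^+ size t.2.2).

Definition tot (M : tmx R n) : R :=
  \sum_(i <- enum 'I_n) \sum_(k <- enum 'I_n) W (M i k).

Lemma W_ge0 S : 0 <= W S.
Proof.
apply: sumr_ge0 => t _; apply: mulr_ge0 => //.
by apply: mulr_ge0; apply: exprn_ge0.
Qed.

Lemma tot_ge0 M : 0 <= tot M.
Proof. by apply: sumr_ge0 => i _; apply: sumr_ge0 => k _; apply: W_ge0. Qed.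

Lemma W_flatten Ls : W (flatten Ls) = \sum_(L <- Ls) W L.
Proof. by rewrite /W big_flatten. Qed.

Lemma W_tmul S T : W (tmul S T) = W S * W T.
Proof.
rewrite /W /tmul big_allpairs_dep mulr_suml; apply: eq_bigr => s _.
rewrite mulr_sumr; apply: eq_bigr => t _ /=.
rewrite normrM !size_cat !exprD; ring.
Qed.

Lemma le_sum_seq (I : eqType) (r : seq I) (F : I -> R) j :
  uniq r -> j \in r -> (forall i, 0 <= F i) -> F j <= \sum_(i <- r) F i.
Proof.
move=> ur jr F0; rewrite (bigD1_seq j) //= lerDl.
by apply: sumr_ge0 => i _.
Qed.

Lemma W_mxmul (M N : tmx R n) i k :
  W (mxmul M N i k) = \sum_(j <- enum 'I_n) W (M i j) * W (N j k).
Proof.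
rewrite /mxmul W_flatten big_map; apply: eq_bigr => j _; exact: W_tmul.
Qed.

Lemma tot_mxmul M N : tot (mxmul M N) <= tot M * tot N.
Proof.
rewrite /tot mulr_suml; apply: ler_sum => i _.
under eq_bigr do rewrite W_mxmul.
rewrite exchange_big /= mulr_suml; apply: ler_sum => j _.
rewrite -mulr_sumr; apply: ler_wpM2l; first exact: W_ge0.
apply: (le_sum_seq (F := fun j => \sum_(k <- enum 'I_n) W (N j k))).
- exact: enum_uniq.
- by rewrite mem_enum.
- by move=> j'; apply: sumr_ge0 => k _; apply: W_ge0.
Qed.

Lemma W_mxid j k : W (@mxid R n j k) = (j == k)%:R.
Proof.
rewrite /W /mxid; case: eqP => _; last by rewrite big_nil.
by rewrite big_cons big_nil /= normr1 !expr0 !mulr1 addr0.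
Qed.

Lemma tot_mxid M : tot (mxmul M (@mxid R n)) = tot M.
Proof.
rewrite /tot; apply: eq_bigr => i _; apply: eq_bigr => k _.
rewrite W_mxmul (bigD1_seq k) ?mem_enum ?enum_uniq //= W_mxid eqxx mulr1.
rewrite big1 ?addr0 // => j /negbTE jk; by rewrite W_mxid jk mulr0.
Qed.

Lemma tot_foldr (gs : seq ncpoly) M :
  tot (mxmul M (foldr (@step R n) (@mxid R n) gs)) <=
  tot M * \prod_(g <- gs) tot (JD g).
Proof.
elim: gs M => [|g gs IH] M /=.
  by rewrite tot_mxid big_nil mulr1.
apply: le_trans (tot_mxmul _ _) _.
rewrite big_cons; apply: ler_wpM2l; first exact: tot_ge0.
exact: IH.
Qed.

Lemma W_trace M : W (Defs.mxtrace M) <= tot M.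
Proof.
rewrite /Defs.mxtrace W_flatten big_map /tot; apply: ler_sum => i _.
apply: (le_sum_seq (F := fun k => W (M i k))).
- exact: enum_uniq.
- by rewrite mem_enum.
- by move=> k; apply: W_ge0.
Qed.

Lemma W_Q_foldr g (gs : seq ncpoly) :
  W (Defs.mxtrace (foldr (@step R n) (@mxid R n) (g :: gs))) <=
  \prod_(h <- g :: gs) tot (JD h).
Proof.
apply: le_trans (W_trace _) _; rewrite big_cons; exact: tot_foldr.
Qed.

End Wt.

Section JDw.
Variables (R : numClosedFieldType) (n : nat) (x y : R).
Local Notation word := (word n).
Local Notation ncpoly := (ncpoly R n).

Definition hh (e : nat) : R := \sum_(k <- iota 0 e) x ^+ k * y ^+ (e - k.+1).

Lemma sum_const_iota (c : R) a e : \sum_(k <- iota a e) c = c * e%:R.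
Proof.
elim: e a => [|e IH] a /=; first by rewrite big_nil mulr0.
by rewrite big_cons IH -natr1 mulrDr mulr1 addrC.
Qed.

Lemma occ_sum (w : word) (G : nat -> R) :
  \sum_(j <- enum 'I_n) \sum_(k <- occ j w) G k = \sum_(k <- iota 0 (size w)) G k.
Proof.
rewrite /occ; under eq_bigr do rewrite big_filter big_mkcond.
rewrite exchange_big /= big_seq [RHS]big_seq; apply: eq_bigr => k.
rewrite mem_iota add0n => /andP[_ kw]; rewrite -big_mkcond /=.
case: w kw => // a0 w' kw.
rewrite (eq_bigl (fun j => j == nth a0 (a0 :: w') k)); last first.
  move=> j /=; rewrite (set_nth_default a0 j kw).
  by apply/eqP/eqP => [<-|->].
by rewrite (big_seq1_uniq (fun=> G k)) ?enum_uniq ?mem_enum.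
Qed.

Lemma Wpartial_sum (L : ncpoly) :
  \sum_(j <- enum 'I_n) W x y (partial j L) = \sum_(u <- L) `|u.1| * hh (size u.2).
Proof.
rewrite /W /partial.
under eq_bigr do rewrite big_flatten big_map.
rewrite exchange_big /=; apply: eq_bigr => u _.
under eq_bigr do rewrite big_map /= -mulr_sumr.
rewrite -mulr_sumr; congr (_ * _).
rewrite (occ_sum _ (fun k => x ^+ size (take k u.2) * y ^+ size (drop k.+1 u.2))).
rewrite /hh big_seq [RHS]big_seq; apply: eq_bigr => k.
rewrite mem_iota add0n => /andP[_ kw].
by rewrite size_takel ?size_drop // ltnW.
Qed.

Lemma tot_JD (X : ncpoly) :
  tot x y (JD X) = \sum_(t <- X) `|t.1| * ((size t.2)%:R * hh (size t.2).-1).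
Proof.
rewrite /tot /JD.
under eq_bigr do rewrite Wpartial_sum /Dcyc big_flatten big_map.
rewrite exchange_big /=; apply: eq_bigr => t _.
under eq_bigr do rewrite big_map /= -mulr_sumr.
rewrite -mulr_sumr; congr (_ * _).
rewrite (occ_sum _ (fun k => hh (size (drop k.+1 t.2 ++ take k t.2)))).
rewrite big_seq (eq_bigr (fun=> hh (size t.2).-1)); last first.
  move=> k; rewrite mem_iota add0n => /andP[_ kw].
  rewrite size_cat size_drop size_takel ?(ltnW kw) //; congr hh.
  lia.
by rewrite -big_seq sum_const_iota mulrC.
Qed.

Lemma tot_JD_Sigma (P : ncpoly) :
  tot x y (JD (Sigma P)) = \sum_(t <- P) `|t.1| * hh (size t.2).-1.
Proof.
rewrite tot_JD /Sigma big_map; apply: eq_bigr => t _ /=.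
case: (size t.2) => [|d]; first by rewrite /hh /= big_nil !mulr0.
rewrite normrM normfV normr_nat mulrA divfK // pnatr_eq0.
by [].
Qed.

End JDw.

Lemma hh_R1 (R : numClosedFieldType) (x y : R) e : hh x y e.+1 = x ^+ e + y * hh x y e.
Proof.
rewrite /hh -addn1 iotaD big_cat /= add0n big_cons big_nil addn1 subnn expr0 mulr1 addr0.
rewrite addrC mulr_sumr big_seq [in RHS]big_seq; congr (_ + _); apply: eq_bigr => k.
rewrite mem_iota add0n => /andP[_ ke].
have -> : (e.+1 - k.+1 = (e - k.+1).+1)%N by lia.
by rewrite exprS mulrCA.
Qed.

Lemma hh_R2 (R : numClosedFieldType) (x y : R) e : hh x y e.+1 = y ^+ e + x * hh x y e.
Proof.
rewrite /hh /= big_cons expr0 mul1r subn1 /=; congr (_ + _).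
rewrite -[1%N]addn0 iotaDl big_map mulr_sumr; apply: eq_bigr => k _.
by rewrite add1n exprS subSS mulrA.
Qed.

Lemma hh0 (R : numClosedFieldType) (x y : R) : hh x y 0 = 0.
Proof. by rewrite /hh big_nil. Qed.

Section Final.
Variables (R : numClosedFieldType) (n : nat) (tau : word n -> R) (C0 A : R).
Hypotheses (hC0 : 0 <= C0) (htau : forall q : word n, `|tau q| <= C0 ^+ size q)
  (A0 : 0 < A) (hCA : 2 * C0 <= A).
Local Notation ncpoly := (ncpoly R n).

Lemma hbound (f : nat -> R) : f 0%N = 0 -> (forall e, f e.+1 = A ^+ e + C0 * f e) ->
  forall d, A ^+ 2 * f d.-1 <= 2 * A ^+ d.
Proof.
move=> f0 fS.
have H : forall e, A * f e <= 2 * A ^+ e.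
  elim=> [|e IH]; first by rewrite f0 mulr0 expr0 mulr1 ler0n.
  rewrite fS mulrDr mulrCA.
  apply: le_trans (_ : A * A ^+ e + C0 * (2 * A ^+ e) <= _).
    rewrite lerD2l. first [ exact: (ler_wpM2l hC0) | idtac "T1" ]. 
  rewrite mulrA [C0 * 2]mulrC exprS.
  have : 2 * C0 * A ^+ e <= A * A ^+ e.
    by apply: ler_wpM2r => //; apply: exprn_ge0; exact: ltW.
  move=> h; apply: le_trans (lerD (lexx _) h) _.
  by rewrite mulr2n mulrDl mul1r le_refl.
case=> [|d] /=; first by rewrite f0 mulr0 expr0 mulr1 ler0n.
rewrite expr2 -mulrA exprS [2 * _]mulrCA; exact: (ler_wpM2l (ltW A0) (H d)).
Qed.

Definition wt (P : ncpoly) := gwt (@size 'I_n) A P.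

Lemma hh_le x y d (hxy : forall d, A ^+ 2 * hh x y d.-1 <= 2 * A ^+ d) :
  hh x y d.-1 <= 2 / A ^+ 2 * A ^+ d.
Proof.
have A2 : 0 < A ^+ 2 by apply: exprn_gt0.
rewrite -(ler_pM2l A2); apply: le_trans (hxy d) _.
rewrite mulrA mulrCA mulfV ?mulr1 //; exact: lt0r_neq0.
Qed.

Lemma tot_JD_bound x y (hxy : forall d, A ^+ 2 * hh x y d.-1 <= 2 * A ^+ d) (P : ncpoly) :
  tot x y (JD (Sigma P)) <= 2 / A ^+ 2 * wt P.
Proof.
rewrite tot_JD_Sigma /wt /gwt mulr_sumr; apply: ler_sum => t _.
rewrite mulrCA; apply: ler_wpM2l => //; exact: hh_le.
Qed.

Lemma hAC d : A ^+ 2 * hh A C0 d.-1 <= 2 * A ^+ d.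
Proof. by apply: hbound => [|e]; [exact: hh0 | exact: hh_R1]. Qed.

Lemma hCA' d : A ^+ 2 * hh C0 A d.-1 <= 2 * A ^+ d.
Proof. by apply: hbound => [|e]; [exact: hh0 | exact: hh_R2]. Qed.

Lemma wt_tauSym S : wt (tauSym tau S) <= W A C0 S + W C0 A S.
Proof.
rewrite /wt /gwt /tauSym big_flatten big_map /W -big_split /=.
apply: ler_sum => t _; rewrite !big_cons big_nil addr0 /=.
have hA : 0 <= A by exact: ltW.
apply: lerD; rewrite normrM -mulrA; apply: ler_wpM2l => //.
  rewrite [X in X <= _]mulrC; apply: ler_wpM2l; [exact: exprn_ge0 | exact: htau].
rewrite [X in X <= _]mulrC [X in _ <= X]mulrC.
apply: ler_wpM2l; [exact: exprn_ge0 | exact: htau].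
Qed.

Lemma prod_scale (c : R) (Ps : seq ncpoly) (F : ncpoly -> R) :
  \prod_(P <- Ps) (c * F P) = c ^+ size Ps * \prod_(P <- Ps) F P.
Proof.
elim: Ps => [|P Ps IH]; first by rewrite !big_nil expr0 mulr1.
by rewrite !big_cons IH /= exprS; ring.
Qed.

Lemma wt_Q (P0 : ncpoly) (Ps : seq ncpoly) :
  wt (Q tau (map (@Sigma R n) (P0 :: Ps))) <=
  2 * (2 / A ^+ 2) ^+ (size Ps).+1 * \prod_(P <- P0 :: Ps) wt P.
Proof.
have hA : 0 <= A by exact: ltW.
apply: le_trans (wt_tauSym _) _.
have key : forall x y, 0 <= x -> 0 <= y ->
    (forall d, A ^+ 2 * hh x y d.-1 <= 2 * A ^+ d) ->
    W x y (Defs.mxtrace (foldr (@step R n) (@mxid R n) (map (@Sigma R n) (P0 :: Ps))))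
    <= (2 / A ^+ 2) ^+ (size Ps).+1 * \prod_(P <- P0 :: Ps) wt P.
  move=> x y x0 y0 hxy; rewrite map_cons.
  apply: le_trans (W_Q_foldr x0 y0 _ _) _.
  rewrite -map_cons big_map -[(size Ps).+1]/(size (P0 :: Ps)) -prod_scale.
  apply: ler_prod => P _; rewrite tot_ge0 //=; exact: tot_JD_bound.
apply: le_trans (lerD (key _ _ hA hC0 hAC) (key _ _ hC0 hA hCA')) _.
set X := (_ * \prod_(P <- _) _).
rewrite -mulrA -/X mulrDl mul1r; exact: lexx.
Qed.

End Final.

Section Main.
Variables (R : numClosedFieldType) (n : nat) (tau : word n -> R) (C0 A : R).
Hypotheses (hC0 : 0 <= C0) (htau : forall q : word n, `|tau q| <= C0 ^+ size q)
  (A0 : 0 < A) (hCA : 2 * C0 <= A).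
Local Notation ncpoly := (ncpoly R n).
Local Notation Sig := (@Sigma R n).

Lemma lsum_psub (X : Type) (P P' : seq (R * X)) phi :
  lsum (P ++ [seq (- t.1, t.2) | t <- P']) phi = lsum P phi - lsum P' phi.
Proof. by rewrite lsum_cat lsum_opp. Qed.

Lemma congr_nf (Ps pre : seq ncpoly) phi :
  lsum (Q tau (pre ++ map Sig Ps)) phi = lsum (Q tau (pre ++ map Sig (map (@nf R _) Ps))) phi.
Proof.
elim: Ps pre => [|P Ps IH] pre //=.
have [psi H] := slot_Q tau pre (map Sig Ps) phi.
rewrite H lsum_Sigma (lsum_congr _ (fun x => esym (gcoef_nf P x))) -lsum_Sigma -H.
by rewrite -cat_rcons IH cat_rcons.
Qed.

Lemma normA_gnorm (P : ncpoly) : normA A P = gnorm (@size 'I_n) A P.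
Proof. by []. Qed.

Lemma prod_nseq (k : nat) (a : ncpoly) (F : ncpoly -> R) :
  \prod_(P <- nseq k a) F P = F a ^+ k.
Proof. by elim: k => [|k IH]; rewrite ?big_nil ?expr0 //= big_cons IH exprS. Qed.

Lemma MB (Ps : seq ncpoly) : (0 < size Ps)%N ->
  normA A (Q tau (map Sig Ps)) <=
  2 * (2 / A ^+ 2) ^+ (size Ps) * \prod_(P <- Ps) normA A P.
Proof.
case: Ps => // P0 Ps _.
have hA : 0 <= A by exact: ltW.
rewrite !normA_gnorm.
have -> : gnorm (@size 'I_n) A (Q tau (map Sig (P0 :: Ps))) =
          gnorm (@size 'I_n) A (Q tau (map Sig (map (@nf R _) (P0 :: Ps)))).
  apply: gnorm_congr_abs => x; rewrite !gcoefE.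
  by rewrite -[map Sig (P0 :: Ps)]cat0s congr_nf.
apply: le_trans; first exact: gnorm_le_wt.
rewrite [map (@nf R _) _]map_cons.
apply: le_trans; first exact: (wt_Q hC0 htau A0 hCA).
rewrite size_map -map_cons big_map /=.
under eq_bigr do rewrite /wt gwt_nf.
exact: lexx.
Qed.


Lemma normA_psub_sym (f g : ncpoly) : normA A (psub f g) = normA A (psub g f).
Proof.
rewrite !normA_gnorm; apply: gnorm_congr_abs => x.
rewrite !gcoefE /psub !lsum_psub -normrN opprB; done.
Qed.

Section Tele.
Variables (m : nat) (f g : ncpoly).

Definition Phi k := Q tau (map Sig (nseq k g ++ nseq (m - k) f)).
Definition T k := Q tau (map Sig (nseq k g ++ psub g f :: nseq (m - k - 1) f)).

Lemma tele_step k y : (k < m)%N ->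
  gcoef (T k) y = gcoef (Phi k.+1) y - gcoef (Phi k) y.
Proof.
move=> km; rewrite /T /Phi !gcoefE.
set j := (m - k - 1)%N.
have -> : (m - k = j.+1)%N by rewrite /j; lia.
have -> : (m - k.+1 = j)%N by rewrite /j; lia.
have -> : nseq k.+1 g = nseq k g ++ [:: g] by rewrite -addn1 nseqD.
rewrite -catA /= !map_cat !map_cons.
have [psi H] := slot_Q tau (map Sig (nseq k g)) (map Sig (nseq (m - k - 1) f))
  (fun x => (x == y)%:R).
by rewrite !H !lsum_Sigma /psub lsum_psub.
Qed.

Lemma tele y :
  gcoef (psub (QmS tau m g) (QmS tau m f)) y =
  \sum_(0 <= k < m) gcoef (T k) y.
Proof.
rewrite (@telescope_sumr_eq _ _ _ (fun k => gcoef (Phi k) y)) //; last first.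
  by move=> k /andP[_ km]; apply: tele_step.
rewrite /Phi subnn subn0 cats0 /= !map_nseq /QmS.
by rewrite !gcoefE /psub lsum_psub.
Qed.

End Tele.

Lemma claim1 (m : nat) (f g : ncpoly) : (0 < m)%N ->
  normA A (psub (QmS tau m g) (QmS tau m f))
    <= 2 * (2 / A ^+ 2) ^+ m *
       \sum_(k < m) normA A g ^+ k * normA A f ^+ (m - k - 1) * normA A (psub f g).
Proof.
move=> m0; have hA : 0 <= A by exact: ltW.
rewrite normA_gnorm.
have -> : gnorm (@size 'I_n) A (psub (QmS tau m g) (QmS tau m f)) =
    gnorm (@size 'I_n) A (flatten [seq T m f g k | k <- index_iota 0 m]).
  apply: gnorm_congr_abs => y; rewrite tele; congr `|_|.
  by rewrite /gcoef big_flatten big_map.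
apply: le_trans; first exact: gnorm_flatten.
rewrite big_map big_mkord mulr_sumr.
apply: ler_sum => -[k km] _ /=.
rewrite -normA_gnorm /T.
apply: le_trans; first (apply: MB; rewrite size_cat /= size_nseq; lia).
have -> : size (nseq k g ++ psub g f :: nseq (m - k - 1) f) = m.
  rewrite size_cat /= size_nseq size_nseq; lia.
rewrite big_cat big_cons !prod_nseq normA_psub_sym.
rewrite le_eqVlt; apply/orP; left; apply/eqP; rewrite /=; ring.
Qed.

Lemma claim2 (m : nat) (g : ncpoly) : (0 < m)%N ->
  normA A (QmS tau m g) <= 2 * (2 / A ^+ 2) ^+ m * normA A g ^+ m.
Proof.
move=> m0; rewrite /QmS -map_nseq.
apply: le_trans; first (apply: MB; rewrite size_nseq //).
by rewrite size_nseq prod_nseq.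
Qed.

End Main.

Unset Implicit Arguments. Set Strict Implicit. Set Printing Implicit Defensive.

Theorem mainTheorem9 (R : numClosedFieldType) (n : nat)
  (tau : word n -> R) (C0 A : R)
  (hC0 : 0 <= C0)
  (htau : forall q : word n, `|tau q| <= C0 ^+ size q)
  (hA : 1 < A) (hCA : C0 / A < 1 / 2)
  (m : nat) (hm : (0 < m)%N) (f g : ncpoly R n)
  (hf : inA0 f) (hg : inA0 g) :
  normA A (psub (QmS tau m g) (QmS tau m f))
    <= 2 * (2 / A ^+ 2) ^+ m *
       \sum_(k < m) normA A g ^+ k * normA A f ^+ (m - k - 1) * normA A (psub f g)
  /\ normA A (QmS tau m g) <= 2 * (2 / A ^+ 2) ^+ m * normA A g ^+ m.
Proof.
have A0 : 0 < A := lt_trans ltr01 hA.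
have hCA2 : 2 * C0 <= A.
  rewrite ltr_pdivrMr // in hCA.
  have h := ler_wpM2l (ler0n R 2) (ltW hCA).
  apply: le_trans h _.
  rewrite mulrA mul1r mulfV ?mul1r //.
  by rewrite pnatr_eq0.
split.
  exact: (claim1 hC0 htau A0 hCA2 f g hm).
exact: (claim2 hC0 htau A0 hCA2 g hm).
Qed.
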